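(* Let $d\ge2$ and let $N_1,\dots,N_d,s$ be positive integers with $\min_{1\le i\le d}N_i>s\ge2$. Let $X\subseteq[N_1]\times\cdots\times[N_d]$, $\lambda_0\in(0,\frac1{s-1})$, and let $B\subseteq[-\frac{N_1}{s-1},\frac{N_1}{s-1}]\times\cdots\times[-\frac{N_d}{s-1},\frac{N_d}{s-1}]$ be a set of nonzero integer points such that every $(b_1,\dots,b_d)\in B$ satisfies $\lambda_0\le\max_{1\le i\le d}\frac{|b_i|}{\gcd(b_1,\dots,b_d)N_i}$. Let $\mathbf{b}\in B$, let $f_{\mathbf{b}}:\mathbb{Z}^d\to\mathbb{Z}^{d-1}$ be a map of the form $f_{\mathbf{b}}(\mathbf{x})=M\mathbf{x}+\mathbf{v}$ ($M\in\mathbb{Z}^{(d-1)\times d}$, $\mathbf{v}\in\mathbb{Z}^{d-1}$) such that for all $\mathbf{x}_1,\mathbf{x}_2\in\mathbb{Z}^d$, $f_{\mathbf{b}}(\mathbf{x}_1)=f_{\mathbf{b}}(\mathbf{x}_2)$ iff $\mathbf{x}_1-\mathbf{x}_2=k\mathbf{b}$ for some $k\in\mathbb{Q}$, and let $s^*\le s$ be a positive integer. Then \[ \sum_{\mathbf{b}'\in B}|U^d(X,\mathbf{b},s)\cap U^d(X,\mathbf{b}',s)|\le\frac{4}{s\lambda_0}|U^d(X,\mathbf{b},s)|+\frac{s^*-1}{s}\sum_{\mathbf{b}'\in B}|U^d(X,\mathbf{b}',s)|+\frac{12}{s\lambda_0^2}\sum_{\mathbf{b}^*\in\mathbb{Z}^{d-1}\setminus\{\mathbf{0}\}}|U^{d-1}(f_{\mathbf{b}}(U^d(X,\mathbf{b},s)),\mathbf{b}^*,s^*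 )|. \]
   Context: $[N]=\{1,\dots,N\}$. For $n\ge1$, a finite set $Y\subseteq\mathbb{Z}^n$, $\mathbf{c}\in\mathbb{Z}^n\setminus\{\mathbf{0}\}$ and a positive integer $r$: points $\mathbf{y},\mathbf{y}'$ are congruent mod $\mathbf{c}$ if $\mathbf{y}-\mathbf{y}'\in\mathbb{Z}\mathbf{c}$, and $U^n(Y,\mathbf{c},r)$ is the set of $\mathbf{y}\in Y$ with $|\{\mathbf{y}'\in Y:\mathbf{y}'\equiv\mathbf{y}\pmod{\mathbf{c}}\}|\ge r$. *)

(* Defs.v *)
From HB Require Import structures.
From mathcomp Require Import all_boot all_order all_algebra.
From mathcomp Require Import finmap.
From mathcomp Require Import all_classical all_reals all_analysis.
Set Implicit Arguments. Unset Strict Implicit. Unset Printing Implicit Defensive.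
Import Order.TTheory GRing.Theory Num.Theory.
Local Open Scope ring_scope.
Local Open Scope fset_scope.

(* Points of Z^n are integer row vectors 'rV[int]_n; coordinate i is x 0 i. *)

Definition congr_mod (n : nat) (c y y' : 'rV[int]_n) : Prop :=
  exists k : int, y - y' = k *: c.

Definition U (n : nat) (Y : {fset 'rV[int]_n}) (c : 'rV[int]_n) (r : nat)
  : {fset 'rV[int]_n} :=
  [fset y in Y | (r <= #|` [fset y' in Y | `[< congr_mod c y' y >]]|)%N].

Definition gcdv (n : nat) (b : 'rV[int]_n) : int :=
  \big[gcdz/0]_(i < n) b 0 i.

(* the affine map x |-> M x + v, written on row vectors as x M^T + v *)
Definition affine_map (d e : nat) (M : 'M[int]_(e, d)) (v : 'rV[int]_e)
  (x : 'rV[int]_d) : 'rV[int]_e := x *m M^T + v.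

Definition fimage (T T' : choiceType) (f : T -> T') (A : {fset T}) : {fset T'} :=
  [fset f x | x in A].

(* Main.v *)
Require Import Defs.
From HB Require Import structures.
From mathcomp Require Import all_boot all_order all_algebra.
From mathcomp Require Import finmap.
From mathcomp Require Import all_classical all_reals all_analysis.
From mathcomp Require Import zify ring lra.
Import Order.TTheory GRing.Theory Num.Theory.
Local Open Scope ring_scope.
Lemma pigeon_int (S : seq int) (m : nat) (lo hi : int) :
  uniq S -> (0 < m)%N -> S != [::] ->
  (forall x y, x \in S -> y \in S -> (m%:Z %| x - y)%Z) ->
  (forall x, x \in S -> lo <= x <= hi) ->
  ((size S).-1 * m)%:Z <= hi - lo.
Proof.
move=> uS m0 Sn0 dS bS.
have [x0 x0S] : exists x, x \in S by case: S Sn0 {uS dS bS} => // a l _; exists a; rewrite inE eqxx.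
have lohi : lo <= hi by case/andP: (bS _ x0S) => h1 h2; apply: le_trans h2.
pose n (x : int) := `|x - lo|%N.
have nE : forall x, x \in S -> (n x)%:Z = x - lo.
  move=> x /bS /andP[h1 _]; rewrite /n gez0_abs //; by rewrite subr_ge0.
pose K := (`|hi - lo|%N %/ m)%N.
pose F x := (n x %/ m)%N.
have Finj : {in S &, injective F}.
  move=> x y xS yS Fxy.
  have hm : (n x %% m = n y %% m)%N.
    have := dS _ _ xS yS; rewrite -eqz_mod_dvd.
    have ex := nE _ xS; have ey := nE _ yS.
    move: ex ey; set a := n x; set c := n y => ex ey.
    have -> : x = a%:Z + lo by rewrite ex; ring.
    have -> : y = c%:Z + lo by rewrite ey; ring.
    by rewrite eqz_modDr !modz_nat => /eqP [].
  have : n x = n y by rewrite (divn_eq (n x) m) (divn_eq (n y) m) -/(F x) -/(F y) Fxy hm.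
  move/(congr1 (fun k : nat => k%:Z)); rewrite !nE //; lia.
have : (size (map F S) <= size (iota 0 K.+1))%N.
  apply: uniq_leq_size; first by rewrite map_inj_in_uniq.
  move=> k /mapP[x xS ->]; rewrite mem_iota /= add0n ltnS /F /K leq_div2r //.
  have := nE _ xS; case/andP: (bS _ xS) => _ h; lia.
rewrite size_map size_iota => hs.
have : ((size S).-1 * m <= K * m)%N by rewrite leq_mul2r; apply/orP; right; lia.
have := leq_divM `|hi - lo|%N m. rewrite -/K. lia.
Qed.
Lemma gcdv_ge0 {d} (b : 'rV[int]_d) : 0 <= gcdv b.
Proof. by rewrite /gcdv; elim/big_rec: _ => // i y _ _; rewrite /gcdz. Qed.

Lemma gcdv_bezout {d} (b : 'rV[int]_d) :
  exists u : 'I_d -> int, gcdv b = \sum_j u j * b 0 j.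
Proof.
rewrite /gcdv; elim/big_rec: _ => [|i y _ [u ->]].
  by exists (fun=> 0); rewrite big1 // => j _; rewrite mul0r.
have [al [be]] := Bezoutz (b 0 i) (\sum_j u j * b 0 j) => <-.
exists (fun j => be * u j + (if j == i then al else 0)).
rewrite [in RHS](eq_bigr (fun j => be * (u j * b 0 j) + (if j == i then al * b 0 j else 0))); last first.
  by move=> j _; case: eqP => _; ring.
rewrite big_split /= -mulr_sumr -big_mkcond /= big_pred1_eq; ring.
Qed.

Lemma rat_mult_dvd {d} {b D : 'rV[int]_d} {q : rat} (i0 : 'I_d) :
  map_mx (fun z : int => z%:~R) D = q *: map_mx (fun z : int => z%:~R) b ->
  (gcdv b * D 0 i0) \in dvdz (b 0 i0).
Proof.
move=> hq.
have hj : forall j, D 0 j * b 0 i0 = D 0 i0 * b 0 j.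
  move=> j; apply/eqP; rewrite -(eqr_int rat) !rmorphM /=.
  have := congr1 (fun A : 'M[rat]_(1,d) => A 0 j) hq; have := congr1 (fun A : 'M[rat]_(1,d) => A 0 i0) hq.
  rewrite /= !mxE => -> ->; apply/eqP; ring.
have [u ->] := gcdv_bezout b.
rewrite mulr_suml (eq_bigr (fun j => b 0 i0 * (u j * D 0 j))); last first.
  move=> j _; rewrite -mulrA [b 0 j * _]mulrC -hj; ring.
by rewrite -mulr_sumr dvdz_mulr.
Qed.

Lemma rat_mult_zero {d} {b D : 'rV[int]_d} {q : rat} {i0 : 'I_d} :
  map_mx (fun z : int => z%:~R) D = q *: map_mx (fun z : int => z%:~R) b ->
  b 0 i0 != 0 -> D 0 i0 = 0 -> D = 0.
Proof.
move=> hq hb hD.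
have q0 : q = 0.
  have := congr1 (fun A : 'M[rat]_(1,d) => A 0 i0) hq; rewrite /= !mxE hD /= => /esym/eqP.
  by rewrite mulf_eq0 intr_eq0 (negbTE hb) orbF => /eqP.
apply/matrixP => i j; rewrite ord1 mxE; apply/eqP.
have := congr1 (fun A : 'M[rat]_(1,d) => A 0 j) hq; rewrite /= !mxE q0 mul0r => /eqP.
by rewrite intr_eq0.
Qed.

Lemma fiber_card (R : realType) {d} (b : 'rV[int]_d) (i0 : 'I_d)
  (S : {fset 'rV[int]_d}) (lo hi lam : R) (Nn : nat) :
  (forall x y, x \in S -> y \in S -> exists q : rat,
     map_mx (fun z : int => z%:~R) (x - y) = q *: map_mx (fun z : int => z%:~R) b) ->
  (forall x, x \in S -> lo <= (x 0 i0)%:~R <= hi) ->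
  lo <= hi -> 0 < lam -> (0 < Nn)%N ->
  lam <= `|b 0 i0|%:~R / ((gcdv b * Nn%:Z)%:~R) ->
  #|`S|%:R <= (hi - lo) / (lam * Nn%:R) + 1.
Proof.
move=> hS hb lohi lam0 N0 hlam.
set g := gcdv b in hlam.
have g0 : 0 < g.
  rewrite lt_def gcdv_ge0 andbT; apply/eqP => g0; move: hlam; rewrite g0 mul0r invr0 mulr0.
  by rewrite leNgt lam0.
have b0 : b 0 i0 != 0.
  apply/eqP => b0; move: hlam; rewrite b0 mul0r; by rewrite leNgt lam0.
have gNpos : 0 < (g * Nn%:Z)%:~R :> R by rewrite ltr0z pmulr_rgt0 // ltz_nat.
have Nr : 0 < Nn%:R :> R by rewrite ltr0n.
have hlam' : lam * (g%:~R * Nn%:R) <= `|b 0 i0|%:~R.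
  by move: hlam; rewrite ler_pdivlMr // rmorphM.
have [S0|Sn0] := eqVneq (enum_fset S) [::].
  have -> : #|`S| = 0%N by rewrite /= S0.
  have : 0 <= (hi - lo) / (lam * Nn%:R).
    apply: divr_ge0; first by rewrite subr_ge0.
    by apply: mulr_ge0; [apply: ltW|apply: ltW].
  rewrite mulr0n; lra.
pose V := map (fun x : 'rV[int]_d => g * x 0 i0) (enum_fset S).
have Vinj : {in enum_fset S &, injective (fun x : 'rV[int]_d => g * x 0 i0)}.
  move=> x y xS yS /= /(mulfI (lt0r_neq0 g0)) hxy.
  have [q hq] := hS x y xS yS.
  apply/eqP; rewrite -subr_eq0; apply/eqP; apply: (rat_mult_zero hq b0).
  by rewrite mxE [(- y) 0 i0]mxE hxy subrr.
have := @pigeon_int V (absz (b 0 i0)) (Num.ceil (g%:~R * lo)) (Num.floor (g%:~R * hi)).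
rewrite map_inj_in_uniq // fset_uniq /= absz_gt0 b0 size_map.
have -> : (V != [::]) = true by rewrite /V; case: (enum_fset S) Sn0.
move=> /(_ isT isT isT).
have H1 : forall x y, x \in V -> y \in V -> x - y \in dvdz (absz (b 0 i0))%:Z.
  move=> _ _ /mapP[x xS ->] /mapP[y yS ->].
  have [q hq] := hS x y xS yS.
  rewrite -mulrBr; have := rat_mult_dvd i0 hq.
  by rewrite [(x - y) 0 i0]mxE [(- y) 0 i0]mxE.
have H2 : forall x, x \in V -> Num.ceil (g%:~R * lo) <= x <= Num.floor (g%:~R * hi).
  move=> _ /mapP[x xS ->]; case/andP: (hb x xS) => h1 h2.
  rewrite ceil_le_int floor_ge_int rmorphM /=.
  by rewrite !ler_pM2l ?ltr0z // h1 h2.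
move=> /(_ H1 H2) hp.
have hpR : ((muln #|`S|.-1 (absz (b 0 i0)))%:R : R) <= g%:~R * hi - g%:~R * lo.
  have := floor_le (g%:~R * hi); have := ceil_ge (g%:~R * lo).
  move: hp; rewrite -(ler_int R) => hp.
  rewrite rmorphB /= in hp; rewrite -[(_ * _)%N%:R]/(((_ * _)%N : int)%:~R).
  move=> h1 h2; apply: (le_trans hp); lra.
have hs : #|`S|%:R - 1 = (#|`S|.-1)%:R :> R.
  rewrite -[in LHS](@prednK #|`S|); first by rewrite -natr1; ring.
  by move: Sn0; case: (enum_fset S).
rewrite -lerBlDr ler_pdivlMr ?mulr_gt0 // hs.
have k0 : 0 <= (#|`S|.-1)%:R :> R by [].
rewrite natrM natr_absz in hpR.
have gR : 0 < g%:~R :> R by rewrite ltr0z.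
move: k0 hpR hlam' gR; set k := (#|`S|.-1)%:R; set B := `|b 0 i0|%:~R; set G := g%:~R.
move=> *; nra.
Qed.
Lemma card_sep (T : choiceType) (A : {fset T}) (P : pred T) :
  #|` [fset x in A | P x]%fset| = (\sum_(x <- A | P x) 1)%N.
Proof.
rewrite card_fset_sum1 -[RHS]big_filter; apply: perm_big; apply: uniq_perm.
- exact: fset_uniq.
- by rewrite filter_uniq // fset_uniq.
- by move=> x; rewrite mem_filter !inE andbC.
Qed.

Lemma sum_partition (V : nmodType) (T T' : choiceType) (A : seq T) (W : {fset T'})
  (f : T -> T') (F : T -> V) :
  (forall x, x \in A -> f x \in W) ->
  \sum_(x <- A) F x = \sum_(w <- W) \sum_(x <- A | f x == w) F x.
Proof.
move=> hA.
rewrite (eq_bigr (fun w => \sum_(x <- A) if f x == w then F x else 0)); last first.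
  by move=> w _; rewrite big_mkcond.
rewrite exchange_big /= big_seq [RHS]big_seq; apply: eq_bigr => x xA.
rewrite -big_mkcond /= -big_filter.
rewrite (eq_filter (a2 := pred1 (f x))); last by move=> w; rewrite /= eq_sym.
by rewrite filter_pred1_uniq ?fset_uniq ?hA // big_seq1.
Qed.

Lemma sum_const_R (R : realType) (T : Type) (r : seq T) (P : pred T) (c : R) :
  \sum_(x <- r | P x) c = (count P r)%:R * c.
Proof.
elim: r => [|a r IH]; first by rewrite big_nil mul0r.
rewrite big_cons IH /=; case: (P a) => /=; last by rewrite add0n.
by rewrite -addn1 natrD; ring.
Qed.

Lemma congr_refl {n} (c y : 'rV[int]_n) : congr_mod c y y.
Proof. by exists 0; rewrite subrr scale0r. Qed.

Lemma congr_sym {n} {c x y : 'rV[int]_n} : congr_mod c x y -> congr_mod c y x.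
Proof. by case=> k hk; exists (- k); rewrite scaleNr -hk opprB. Qed.

Lemma congr_trans {n} {c x y z : 'rV[int]_n} :
  congr_mod c x y -> congr_mod c y z -> congr_mod c x z.
Proof.
case=> k hk [l hl]; exists (k + l); rewrite scalerDl -hk -hl.
by rewrite addrA subrK.
Qed.

Definition cl {n} (Z : {fset 'rV[int]_n}) (c y : 'rV[int]_n) :=
  [fset y' in Z | `[< congr_mod c y' y >]]%fset.

Lemma UE {n} (Z : {fset 'rV[int]_n}) c r y :
  (y \in U Z c r) = (y \in Z) && (r <= #|` cl Z c y|)%N.
Proof. by rewrite /U !inE. Qed.

Lemma clE {n} (Z : {fset 'rV[int]_n}) c y y' :
  (y' \in cl Z c y) = (y' \in Z) && `[< congr_mod c y' y >].
Proof. by rewrite /cl !inE. Qed.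

Lemma cl_eq {n} (Z : {fset 'rV[int]_n}) c x y :
  congr_mod c x y -> cl Z c x = cl Z c y.
Proof.
move=> hxy; apply/fsetP => z; rewrite !clE; case: (z \in Z) => //=.
apply/asboolP/asboolP => h; first exact: congr_trans h hxy.
exact: congr_trans h (congr_sym hxy).
Qed.

Lemma few_bound {n} (X Y : {fset 'rV[int]_n}) (c : 'rV[int]_n) (s t : nat) :
  (Y `<=` X)%fset ->
  (s * (\sum_(y <- (Y `&` U X c s)%fset | ~~ (t <= #|` cl Y c y|)%N) 1)
     <= t.-1 * #|` U X c s|)%N.
Proof.
move=> YX.
set Us := U X c s.
rewrite -big_filter.
set S1 := [seq y <- (Y `&` Us)%fset | ~~ (t <= #|`cl Y c y|)%N].
have uS1 : uniq S1 by rewrite filter_uniq // fset_uniq.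
have S1P : forall y, y \in S1 -> [/\ y \in Y, y \in Us & ~~ (t <= #|`cl Y c y|)%N].
  by move=> y; rewrite mem_filter !inE => /andP[-> /andP[-> ->]].
have UsX : forall x, x \in Us -> x \in X by move=> x; rewrite UE => /andP[].
have clX : forall y, y \in Us -> cl X c y = [fset x in Us | `[< congr_mod c x y >]]%fset.
  move=> y yU; apply/fsetP => z; rewrite clE !inE.
  case zX: (z \in X) => /=; last by case zU: (z \in Us) => //; rewrite UsX in zX.
  case: (boolP `[< congr_mod c z y >]) => [hzy|]; rewrite ?andbF ?andbT //.
  rewrite -/(cl X c z) (@cl_eq _ X c z y (asboolW hzy)); by move: yU; rewrite UE => /andP[_ ->].
rewrite big_distrr /=.
apply: (@leq_trans (\sum_(y <- S1) \sum_(x <- Us | `[< congr_mod c x y >]) 1)%N).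
  rewrite big_seq [X in (_ <= X)%N]big_seq; apply: leq_sum => y yS1.
  have [_ yU _] := S1P y yS1.
  by rewrite muln1 -card_sep -clX //; move: yU; rewrite UE => /andP[].
rewrite (eq_bigr (fun y => \sum_(x <- Us) if `[< congr_mod c x y >] then 1 else 0)%N); last first.
  by move=> y _; rewrite big_mkcond.
rewrite exchange_big /=.
rewrite (eq_bigr (fun x => \sum_(y <- S1 | `[< congr_mod c x y >]) 1)%N); last first.
  by move=> x _; rewrite [RHS]big_mkcond.
apply: (@leq_trans (\sum_(x <- Us) t.-1)%N); last first.
  by rewrite big_const_seq count_predT iter_addn_0 mulnC.
apply: leq_sum => x _.
case: (boolP (has (fun y => `[< congr_mod c x y >]) S1)) => [/hasP[y0 y0S1 hxy0]|hn]; last first.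
  by rewrite big_hasC.
have [y0Y _ hy0] := S1P y0 y0S1.
rewrite -big_filter sum1_size.
apply: (@leq_trans #|` cl Y c y0|); last by move: hy0; rewrite -ltnNge => h; rewrite -ltnS; apply: leq_trans h _; exact: leqSpred.
apply: uniq_leq_size; first by rewrite filter_uniq.
move=> y; rewrite mem_filter => /andP[hxy yS1].
have [yY _ _] := S1P y yS1.
rewrite clE yY /=; apply/asboolP.
exact: congr_trans (congr_sym (asboolW hxy)) (asboolW hxy0).
Qed.

Lemma affine_sub {d e} (M : 'M[int]_(e,d)) (v : 'rV[int]_e) x y :
  affine_map M v x - affine_map M v y = (x - y) *m M^T.
Proof. by rewrite /affine_map mulmxBl; rewrite opprD addrACA subrr addr0. Qed.

Lemma many_in_U {d e} (M : 'M[int]_(e,d)) (v : 'rV[int]_e) (Y : {fset 'rV[int]_d})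
  (b' y : 'rV[int]_d) (t : nat) :
  b' *m M^T != 0 -> y \in Y -> (t <= #|` cl Y b' y|)%N ->
  affine_map M v y \in U (fimage (affine_map M v) Y) (b' *m M^T) t.
Proof.
move=> hb yY ht; set f := affine_map M v.
rewrite UE; apply/andP; split; first by apply: in_imfset.
apply: (leq_trans ht).
have inj : {in cl Y b' y &, injective f}.
  move=> y1 y2; rewrite !clE => /andP[_ /asboolW h1] /andP[_ /asboolW h2] hf.
  have [k hk] := congr_trans h1 (congr_sym h2).
  have := affine_sub M v y1 y2; rewrite -/f hf subrr hk -scalemxAl => /esym/eqP.
  rewrite scalemx_eq0 (negbTE hb) orbF => /eqP k0.
  by apply/eqP; rewrite -subr_eq0 hk k0 scale0r.
apply: (@leq_trans #|` [fset f x | x in cl Y b' y]%fset|).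
  by rewrite [X in (_ <= X)%N]card_in_imfset.
apply: fsubset_leq_card.
apply/fsubsetP => _ /imfsetP[x /= xcl ->].
rewrite clE; apply/andP; split.
  by apply: in_imfset; move: xcl; rewrite clE => /andP[].
apply/asboolP; move: xcl; rewrite clE => /andP[_ /asboolW [k hk]].
by exists k; rewrite affine_sub hk scalemxAl.
Qed.

Lemma bigmax_ex {R : realType} {d} {F : 'I_d -> R} {lam : R} :
  0 < lam -> lam <= \big[Num.max/0]_(i < d) F i -> exists i, lam <= F i.
Proof.
move=> lam0 hl; apply: contrapT => hn.
have : \big[Num.max/0]_(i < d) F i < lam.
  elim/big_ind: _ => // [x y hx hy|i _]; first by rewrite gt_max hx hy.
  by rewrite ltNge; apply/negP => h; apply: hn; exists i.
by rewrite ltNge hl.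
Qed.
Theorem lemma4p9 (R : realType) (d : nat) (N : 'I_d -> nat) (s : nat)
  (X B : {fset 'rV[int]_d}) (lambda0 : R) (b : 'rV[int]_d)
  (M : 'M[int]_(d.-1, d)) (v : 'rV[int]_(d.-1)) (sstar : nat) :
  (2 <= d)%N ->
  (2 <= s)%N ->
  (forall i : 'I_d, (s < N i)%N) ->
  (forall x, x \in X -> forall i : 'I_d, 1 <= x 0 i <= (N i)%:Z) ->
  0 < lambda0 -> lambda0 < 1 / (s%:R - 1) ->
  (forall b', b' \in B -> b' != 0) ->
  (forall b', b' \in B -> forall i : 'I_d,
      `|b' 0 i|%:~R <= (N i)%:R / (s%:R - 1) :> R) ->
  (forall b', b' \in B ->
      lambda0 <= \big[Num.max/0]_(i < d)
                   ((`|b' 0 i|)%:~R / ((gcdv b' * (N i)%:Z)%:~R) : R)) ->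
  b \in B ->
  (forall x1 x2 : 'rV[int]_d,
      affine_map M v x1 = affine_map M v x2 <->
      exists k : rat, map_mx (fun z : int => z%:~R) (x1 - x2)
                      = k *: map_mx (fun z : int => z%:~R) b) ->
  (1 <= sstar <= s)%N ->
  (((\sum_(b' <- B) #|` (U X b s `&` U X b' s)%fset|)%:R : R)%:E <=
     ((4 / (s%:R * lambda0)) * (#|` U X b s|)%:R
      + ((sstar%:R - 1) / s%:R) * (\sum_(b' <- B) #|` U X b' s|)%:R)%:E
     + (12 / (s%:R * lambda0 ^+ 2))%:E *
       \esum_(c in [set c : 'rV[int]_(d.-1) | c != 0%R])
          ((#|` U (fimage (affine_map M v) (U X b s)) c sstar|)%:R)%:E)%E.
Proof.
move=> d2 s2 Ns Xb lp lamlt Bn0 Bb Blam bB hf sst.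
set f := affine_map M v.
have hfq : forall x y, f x = f y -> exists q : rat,
    map_mx (fun z : int => z%:~R) (x - y) = q *: map_mx (fun z : int => z%:~R) b.
  by move=> x y /(hf x y).
set Y := U X b s.
have YX : (Y `<=` X)%fset by apply/fsubsetP => y; rewrite UE => /andP[].
have [i0 hi0] := bigmax_ex lp (Blam b bB).
have Npos : (0 < N i0)%N by apply: leq_ltn_trans (Ns i0).
have NR : 0 < (N i0)%:R :> R by rewrite ltr0n.
have sR : 2 <= s%:R :> R by rewrite (ler_nat R 2 s).
have lamlt' : lambda0 * (s%:R - 1) < 1.
  have hs1 : 0 < s%:R - 1 :> R by lra.
  by move: lamlt; rewrite ltr_pdivlMr // mul1r.
have K2 : forall S : {fset 'rV[int]_d}, (S `<=` X)%fset ->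
    (forall x y, x \in S -> y \in S -> f x = f y) -> #|`S|%:R <= lambda0^-1 + 1.
  move=> S SX Sf.
  apply: le_trans (@fiber_card R d b i0 S 1 (N i0)%:R lambda0 (N i0) _ _ _ lp Npos hi0) _.
  - by move=> x y xS yS; apply: hfq; apply: Sf.
  - move=> x xS; have /andP[h1 h2] := Xb x (fsubsetP SX x xS) i0.
    by rewrite -(ler_int R) in h1; rewrite -(ler_int R) in h2; rewrite h1 h2.
  - by rewrite (ler_nat R 1); apply: leq_trans (Ns i0).
  rewrite lerD2r ler_pdivrMr ?mulr_gt0 //.
  have -> : lambda0^-1 * (lambda0 * (N i0)%:R) = (N i0)%:R by field; lra.
  lra.
have K1 : forall S : {fset 'rV[int]_d}, (S `<=` 0 |` B)%fset ->
    (forall x y, x \in S -> y \in S -> x *m M^T = y *m M^T) ->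
    #|`S|%:R <= 2 / ((s%:R - 1) * lambda0) + 1.
  move=> S SB Sf.
  pose L : R := (N i0)%:R / (s%:R - 1).
  apply: le_trans (@fiber_card R d b i0 S (- L) L lambda0 (N i0) _ _ _ lp Npos hi0) _.
  - move=> x y xS yS; apply: hfq; by rewrite /f /affine_map (Sf x y xS yS).
  - move=> x xS; rewrite -ler_norml -intr_norm.
    have := fsubsetP SB x xS; rewrite !inE => /orP[/eqP ->|xB].
      by rewrite mxE normr0 /L divr_ge0 // ?ler0n // subr_ge0; lra.
    exact: Bb.
  - have : 0 <= L by rewrite /L divr_ge0 ?ler0n // subr_ge0; lra.
    lra.
  rewrite lerD2r.
  have -> : (L - - L) / (lambda0 * (N i0)%:R) = 2 / ((s%:R - 1) * lambda0) by rewrite /L; field; apply/and3P; split; apply/eqP; lra.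
  by rewrite lexx.

have hs1 : 0 < s%:R - 1 :> R by lra.
have sst1 : 1 <= sstar%:R :> R by rewrite (ler_nat R 1); case/andP: sst.
have sstR : sstar.-1%:R = sstar%:R - 1 :> R.
  case/andP: sst => s1 _; rewrite -(prednK s1) -natr1 /=; ring.
pose W c := U (fimage f Y) c sstar.
pose I b' := (Y `&` U X b' s)%fset.
pose K := 2 / ((s%:R - 1) * lambda0) + 1.
(* parallel vectors *)
have hA : ((\sum_(b' <- B | b' *m M^T == 0) #|` I b'|)%:R : R)
            <= 4 / (s%:R * lambda0) * #|`Y|%:R.
  rewrite natr_sum.
  apply: le_trans (_ : _ <= \sum_(b' <- B | b' *m M^T == 0) #|`Y|%:R) _.
    apply: ler_sum => b' _; rewrite ler_nat; apply: fsubset_leq_card; exact: fsubsetIl.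
  rewrite sum_const_R.
  have hc : (count (fun b' => b' *m M^T == 0) B)%:R <= 2 / ((s%:R - 1) * lambda0) :> R.
    have := K1 (0 |` [fset b' in B | b' *m M^T == 0])%fset _ _.
    rewrite cardfsU1 card_sep sum1_count.
    have -> : (0 \notin [fset b' in B | b' *m M^T == 0]%fset) = true.
      rewrite !inE; apply/negP => /andP[/Bn0]; by rewrite eqxx.
    rewrite add1n -natr1 lerD2r; apply.
    - apply/fsubsetP => x; rewrite !inE => /orP[->//|/andP[-> _]]; by rewrite orbT.
    - move=> x y; rewrite !inE => /orP[/eqP->|/andP[_ /eqP->]] /orP[/eqP->|/andP[_ /eqP->]];
        by rewrite ?mul0mx.
  have h24 : 2 / ((s%:R - 1) * lambda0) <= 4 / (s%:R * lambda0) :> R.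
    rewrite ler_pdivrMr ?mulr_gt0 //.
    have -> : 4 / (s%:R * lambda0) * ((s%:R - 1) * lambda0) = 4 * (s%:R - 1) / s%:R.
      by field; apply/andP; split; apply/eqP; lra.
    rewrite ler_pdivlMr; lra.
  apply: ler_wpM2r => //; exact: le_trans hc h24.
(* one non-parallel vector *)
have hB : forall b', b' \in B -> b' *m M^T != 0 ->
   (#|` I b'|%:R : R) <= (lambda0^-1 + 1) * #|` W (b' *m M^T)|%:R
                         + (sstar%:R - 1) / s%:R * #|` U X b' s|%:R.
  move=> b' b'B nzb.
  rewrite card_fset_sum1 (bigID (fun y => sstar <= #|` cl Y b' y|)%N) /= natrD.
  apply: lerD.
  - rewrite -big_filter (@sum_partition _ _ _ _ (W (b' *m M^T)) f); last first.
      move=> y; rewrite mem_filter => /andP[hQ]; rewrite in_fsetI => /andP[yY _].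
      exact: many_in_U.
    rewrite natr_sum.
    apply: le_trans (_ : _ <= \sum_(w <- W (b' *m M^T)) (lambda0^-1 + 1)) _.
      apply: ler_sum => w _; rewrite big_filter_cond -card_sep; apply: K2.
        apply/fsubsetP => y; rewrite !inE => /andP[/andP[yY _] _].
        by case/andP: yY.
      by move=> x y; rewrite !inE => /andP[_ /andP[_ /eqP->]] /andP[_ /andP[_ /eqP->]].
    by rewrite sum_const_R count_predT mulrC.
  - have := few_bound X Y b' s sstar YX.
    rewrite -(ler_nat R) !natrM sstR => h.
    rewrite mulrAC ler_pdivlMr; last by lra.
    by rewrite mulrC.
pose C := [fset b' *m M^T | b' in [fset b' in B | b' *m M^T != 0]%fset]%fset.
pose Sc := \sum_(c <- C) (#|` W c|%:R : R).
have Sc0 : 0 <= Sc by apply: sumr_ge0 => c _; exact: ler0n.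
have hC : \sum_(b' <- B | b' *m M^T != 0) (#|` W (b' *m M^T)|%:R : R) <= K * Sc.
  rewrite -big_filter (@sum_partition _ _ _ _ C (fun b' => b' *m M^T)); last first.
    move=> b'; rewrite mem_filter => /andP[nzb b'B]; apply: in_imfset.
    by rewrite /= !inE b'B nzb.
  rewrite /Sc mulr_sumr; apply: ler_sum => c _.
  rewrite (eq_bigr (fun=> #|`W c|%:R)); last by move=> b' /eqP ->.
  rewrite sum_const_R ler_wpM2r //.
  apply: le_trans (_ : _ <= (#|` [fset b' in B | b' *m M^T == c]%fset|)%:R) _.
    rewrite ler_nat card_sep sum1_count count_filter; apply: sub_count.
    by move=> x /andP[].
  apply: K1.
  - apply/fsubsetP => x; rewrite !inE => /andP[-> _]; by rewrite orbT.
  - by move=> x y; rewrite !inE => /andP[_ /eqP->] /andP[_ /eqP->].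
have hD : (Sc%:E <= \esum_(c in [set c : 'rV[int]_(d.-1) | c != 0%R])
                     ((#|` U (fimage (affine_map M v) (U X b s)) c sstar|)%:R)%:E)%E.
  apply: esum_ge; exists ([set` C]%classic).
    split; first exact: finite_fset.
    move=> c /= /imfsetP[b' /=]; rewrite !inE => /andP[_ nzb] ->; exact: nzb.
  rewrite -fsbig_seq ?fset_uniq // sumEFin.
  by [].
have hK : (lambda0^-1 + 1) * K <= 12 / (s%:R * lambda0 ^+ 2).
  have lam1 : lambda0 <= 1 by nra.
  pose D := s%:R * (s%:R - 1) * lambda0 ^+ 2.
  have D0 : 0 < D by rewrite /D; apply: mulr_gt0; [apply: mulr_gt0; lra | exact: exprn_gt0].
  have e1 : (lambda0^-1 + 1) * K
      = ((1 + lambda0) * (2 + (s%:R - 1) * lambda0) * s%:R) * D^-1.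
    by rewrite /K /D; field; apply/and3P; split; apply/eqP; lra.
  have e2 : 12 / (s%:R * lambda0 ^+ 2) = (12 * (s%:R - 1)) * D^-1.
    by rewrite /D; field; apply/and3P; split; apply/eqP; lra.
  rewrite e1 e2 ler_pM2r ?invr_gt0 //.
  have lt2 : (s%:R - 1) * lambda0 < 1 by rewrite mulrC.
  have ge2 : 0 <= (s%:R - 1) * lambda0 by apply: mulr_ge0; lra.
  have h1 : (1 + lambda0) * (2 + (s%:R - 1) * lambda0) <= 2 * 3.
    by apply: ler_pM; lra.
  have h2 : (1 + lambda0) * (2 + (s%:R - 1) * lambda0) * s%:R <= (2 * 3) * (2 * (s%:R - 1)).
    apply: ler_pM => //; [|lra]; apply: mulr_ge0; lra.
  lra.
have hL : ((\sum_(b' <- B) #|` I b'|)%:R : R) <=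
   4 / (s%:R * lambda0) * #|`Y|%:R
   + (sstar%:R - 1) / s%:R * (\sum_(b' <- B) #|` U X b' s|)%:R
   + 12 / (s%:R * lambda0 ^+ 2) * Sc.
  rewrite (bigID (fun b' => b' *m M^T == 0)) /= natrD.
  have hU : \sum_(b' <- B | b' *m M^T != 0) (#|` U X b' s|%:R : R)
              <= (\sum_(b' <- B) #|` U X b' s|)%:R.
    rewrite natr_sum [X in _ <= X](bigID (fun b' => b' *m M^T != 0)) /= lerDl.
    by apply: sumr_ge0 => c _; exact: ler0n.
  have hBs : ((\sum_(b' <- B | b' *m M^T != 0) #|` I b'|)%:R : R)
     <= (lambda0^-1 + 1) * \sum_(b' <- B | b' *m M^T != 0) (#|` W (b' *m M^T)|%:R : R)
        + (sstar%:R - 1) / s%:R * \sum_(b' <- B | b' *m M^T != 0) (#|` U X b' s|%:R : R).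
    rewrite natr_sum !mulr_sumr -big_split /= big_seq_cond [X in _ <= X]big_seq_cond.
    by apply: ler_sum => b' /andP[b'B nzb]; exact: hB.
  have a0 : 0 <= lambda0^-1 + 1 by rewrite addr_ge0 // invr_ge0 ltW.
  have c0 : 0 <= (sstar%:R - 1) / s%:R :> R by rewrite divr_ge0 //; lra.
  have h1 := ler_wpM2l a0 hC.
  have h2 := ler_wpM2l c0 hU.
  have h3 := ler_wpM2r Sc0 hK.
  move: h1 h2 h3 hBs hA; rewrite mulrA.
  set x1 := (\sum_(b' <- B | b' *m M^T != 0) #|` I b'|)%:R.
  set x2 := (\sum_(b' <- B | b' *m M^T == 0) #|` I b'|)%:R.
  set y1 := (lambda0^-1 + 1) * _.
  set y2 := (sstar%:R - 1) / s%:R * _.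
  set z1 := _ * (\sum_(b' <- B) #|` U X b' s|)%:R.
  lra.
apply: (@le_trans _ _ (((4 / (s%:R * lambda0)) * #|`Y|%:R
          + ((sstar%:R - 1) / s%:R) * (\sum_(b' <- B) #|` U X b' s|)%:R)%:E
          + (12 / (s%:R * lambda0 ^+ 2))%:E * Sc%:E)%E).
  by rewrite -EFinM -EFinD lee_fin.
apply: leeD2l; apply: lee_wpmul2l => //.
by rewrite lee_fin; apply: divr_ge0; [lra | apply: mulr_ge0; [lra | apply: exprn_ge0; exact: ltW]].



Qed.
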